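(* Let $P$ be a finite poset and $t\geq 2$, $n\geq 1$ integers. Suppose $\mathcal{F}\subseteq[t]^n$ is induced $P$-saturated and $i\in[n]$ is not separating for $\mathcal{F}$. Then there exists an induced $P$-saturated family $\mathcal{F}'\subseteq[t]^n$ with $|\mathcal{F}'|=|\mathcal{F}|$ such that $f(i)\in\{1,t\}$ for all $f\in\mathcal{F}'$.
   Context: $[n]=\{1,\dots,n\}$; $[t]^n$ is the set of functions $f:[n]\to[t]$ ordered by $f\leq g$ iff $f(j)\leq g(j)$ for all $j$. An induced copy of $P$ in $\mathcal{F}\subseteq[t]^n$ is an injective map $\phi:P\to\mathcal{F}$ with $\phi(x)\leq\phi(y)$ iff $x\leq_P y$. $\mathcal{F}$ is induced $P$-saturated if it contains no induced copy of $P$ and for every $f\in[t]^n\setminus\mathcal{F}$, $\mathcal{F}\cup\{f\}$ contains an induced copy of $P$. For $f\in[t]^n$, $D_i(f)\in[t]^{n-1}$ is given by $D_i(f)(x)=f(x)$ for $x<i$ and $D_i(f)(x)=f(x+1)$ for $i\leq x\leq n-1$. Coordinate $i$ is separating for $\mathcal{F}$ if there exist distinct $f,f'\in\mathcal{F}$ with $D_i(f)\leq D_i(f')$ and $f(i)>f'(i)$. *)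

(* Defs.v *)
From mathcomp Require Import all_boot all_order.
Set Warnings "-notation-overridden".
Set Implicit Arguments. Unset Strict Implicit. Unset Printing Implicit Defensive.
Import Order.TTheory.

(* [t]^n is modelled as {ffun 'I_n -> 'I_t}: coordinate j+1 of the paper is
   index j : 'I_n, and value k+1 of the paper is k : 'I_t (so 1 ~ 0, t ~ t-1). *)
Definition grid (t n : nat) := {ffun 'I_n -> 'I_t}.

Definition gle (t n : nat) (f g : grid t n) : bool := [forall j, f j <= g j].

Definition induced_copy (d : Order.disp_t) (P : finPOrderType d) (t n : nat)
    (F : {set grid t n}) (phi : P -> grid t n) : Prop :=
  injective phi /\ (forall x, phi x \in F) /\
  (forall x y : P, gle (phi x) (phi y) = (x <= y)%O).

Definition contains_induced (d : Order.disp_t) (P : finPOrderType d) (t n : nat)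
    (F : {set grid t n}) : Prop :=
  exists phi : P -> grid t n, @induced_copy d P t n F phi.

Definition induced_saturated (d : Order.disp_t) (P : finPOrderType d) (t n : nat)
    (F : {set grid t n}) : Prop :=
  ~ @contains_induced d P t n F /\
  forall f : grid t n, f \notin F -> @contains_induced d P t n (f |: F).

Definition Dle (t n : nat) (i : 'I_n) (f g : grid t n) : bool :=
  [forall j, (j != i) ==> (f j <= g j)].

Definition separating (t n : nat) (F : {set grid t n}) (i : 'I_n) : Prop :=
  exists f f', [/\ f \in F, f' \in F, f != f', Dle i f f' & (f' i < f i)%N].

(* Main.v *)
Require Import Defs.
Set Warnings "-notation-overridden".
From mathcomp Require Import all_boot all_order.
Set Implicit Arguments. Unset Strict Implicit. Unset Printing Implicit Defensive.

Definition upd t n (i : 'I_n) (h : grid t n) (v : 'I_t) : grid t n :=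
  [ffun j => if j == i then v else h j].
Definition sq t' n (i : 'I_n) (f : grid t'.+2 n) : grid t'.+2 n :=
  upd i f (if f i == ord0 then ord0 else ord_max).

Lemma upd_i t n (i : 'I_n) h (v : 'I_t) : upd i h v i = v.
Proof. by rewrite ffunE eqxx. Qed.
Lemma upd_j t n (i j : 'I_n) h (v : 'I_t) : j != i -> upd i h v j = h j.
Proof. by rewrite ffunE => /negbTE ->. Qed.

Lemma gleE t n (i : 'I_n) (f g : grid t n) : gle f g = Dle i f g && (f i <= g i).
Proof.
apply/forallP/andP => [H|[/forallP H1 H2] j].
  by split=> //; apply/forallP => j; apply/implyP.
by case: (eqVneq j i) => [->|ne] //; exact: (implyP (H1 j)).
Qed.

Lemma Dle_trans t n (i : 'I_n) (f g h : grid t n) : Dle i f g -> Dle i g h -> Dle i f h.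
Proof.
move=> /forallP H1 /forallP H2; apply/forallP => j; apply/implyP => ne.
exact: leq_trans (implyP (H1 j) ne) (implyP (H2 j) ne).
Qed.

Lemma Dle_refl t n (i : 'I_n) (f : grid t n) : Dle i f f.
Proof. by apply/forallP => j; apply/implyP. Qed.

Lemma Dle_updl t n (i : 'I_n) (f g : grid t n) v : Dle i (upd i f v) g = Dle i f g.
Proof.
by apply: eq_forallb => j; case: (eqVneq j i) => // ne; rewrite upd_j.
Qed.
Lemma Dle_updr t n (i : 'I_n) (f g : grid t n) v : Dle i g (upd i f v) = Dle i g f.
Proof.
by apply: eq_forallb => j; case: (eqVneq j i) => // ne; rewrite upd_j.
Qed.

Lemma upd_eq t n (i : 'I_n) (f g : grid t n) : Dle i f g -> Dle i g f -> upd i f (g i) = g.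
Proof.
move=> /forallP H1 /forallP H2; apply/ffunP => j; rewrite ffunE.
case: (eqVneq j i) => [->|ne] //; apply/val_inj/eqP; rewrite eqn_leq.
by rewrite (implyP (H1 j) ne) (implyP (H2 j) ne).
Qed.

Lemma NSP t n (F : {set grid t n}) i : ~ separating F i ->
  forall f g, f \in F -> g \in F -> f != g -> Dle i f g -> f i <= g i.
Proof.
move=> NS f g fF gF ne D; rewrite leqNgt; apply/negP => lt.
by apply: NS; exists f, g; split.
Qed.

Lemma sq_i t' n (i : 'I_n) (f : grid t'.+2 n) : nat_of_ord (sq i f i) = if nat_of_ord (f i) == 0 then 0 else t'.+1.
Proof. by rewrite /sq upd_i; case: (f i) => [[|k]] ?. Qed.

Lemma sq_gle t' n (F : {set grid t'.+2 n}) i : ~ separating F i ->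
  forall f g, f \in F -> g \in F -> gle (sq i f) (sq i g) = gle f g.
Proof.
move=> /NSP NS f g fF gF.
rewrite !(gleE i) /sq Dle_updl Dle_updr !upd_i.
case: (eqVneq f g) => [->|ne]; first by rewrite !Dle_refl !leqnn.
case D: (Dle i f g) => //=.
have := NS f g fF gF ne D.
case: (f i) => [[|a] ?]; case: (g i) => [[|b] ?] //=.
by move=> ->; rewrite ltnSn.
Qed.

Lemma Dle_sql t' n (i : 'I_n) (f g : grid t'.+2 n) : Dle i (sq i f) g = Dle i f g.
Proof. exact: Dle_updl. Qed.

Lemma sq_inj t' n (F : {set grid t'.+2 n}) i : ~ separating F i ->
  {in F &, injective (sq i)}.
Proof.
move=> /NSP NS f g fF gF E.
have D1 : Dle i f g by rewrite -Dle_sql E Dle_sql Dle_refl.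
have D2 : Dle i g f by rewrite -Dle_sql -E Dle_sql Dle_refl.
apply/eqP; apply: contraT => ne.
have l1 := NS f g fF gF ne D1.
have l2 := NS g f gF fF ltac:(by rewrite eq_sym) D2.
have e : f i = g i by apply/val_inj/eqP; rewrite eqn_leq l1 l2.
by move: ne; rewrite -(upd_eq D1 D2) -e (upd_eq (Dle_refl _ f) (Dle_refl _ f)) eqxx.
Qed.

Lemma eq_off t n (i : 'I_n) (f g : grid t n) : Dle i f g -> Dle i g f -> f i = g i -> f = g.
Proof. by move=> D1 D2 e; rewrite -(upd_eq D1 D2) -e (upd_eq (Dle_refl _ f) (Dle_refl _ f)). Qed.

Lemma Dle_sqr t' n (i : 'I_n) (f g : grid t'.+2 n) : Dle i g (sq i f) = Dle i g f.
Proof. exact: Dle_updr. Qed.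

Lemma key_red t' n (F : {set grid t'.+2 n}) i (h : grid t'.+2 n) (x : 'I_t'.+2) :
  (forall f, f \in F -> Dle i h f -> (h i <= sq i f i) = (x <= f i)) ->
  (forall f, f \in F -> Dle i f h -> (sq i f i <= h i) = (f i <= x)) ->
  (forall f, f \in F -> gle h (sq i f) = gle (upd i h x) f) /\
  (forall f, f \in F -> gle (sq i f) h = gle f (upd i h x)).
Proof.
move=> A B; split=> f fF.
  rewrite !(gleE i) Dle_sqr Dle_updl upd_i.
  by case D: (Dle i h f) => //=; rewrite A.
rewrite !(gleE i) Dle_sql Dle_updr upd_i.
by case D: (Dle i f h) => //=; rewrite B.
Qed.

Lemma in_upd t' n (F : {set grid t'.+2 n}) i (h : grid t'.+2 n) (x : 'I_t'.+2) :
  h \notin sq i @: F -> upd i h x \in F -> nat_of_ord (sq i (upd i h x) i) != nat_of_ord (h i).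
Proof.
move=> hn gF; apply/negP => /eqP e; move/negP: hn; apply; apply/imsetP.
exists (upd i h x) => //; apply: esym; apply: (@eq_off _ _ i).
- by rewrite Dle_sql Dle_updl Dle_refl.
- by rewrite Dle_sqr Dle_updr Dle_refl.
- exact: val_inj.
Qed.

Lemma mid_A t' (c v : nat) : 0 < c -> c < t'.+1 -> (c <= (if v == 0 then 0 else t'.+1)) = (0 < v).
Proof. by move=> c0 ct; case: v => [|v] /=; [rewrite leqn0; case: c c0 ct | rewrite (ltnW ct)]. Qed.

Lemma mid_B t' (c v : nat) : c < t'.+1 -> ((if v == 0 then 0 else t'.+1) <= c) = (v <= 0).
Proof. by move=> ct; case: v => [|v] //=; rewrite leqNgt ct. Qed.

Lemma key t' n (F : {set grid t'.+2 n}) i (h : grid t'.+2 n) :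
  ~ separating F i -> h \notin sq i @: F ->
  exists x, [/\ upd i h x \notin F,
    forall f, f \in F -> gle h (sq i f) = gle (upd i h x) f &
    forall f, f \in F -> gle (sq i f) h = gle f (upd i h x)].
Proof.
move=> NS0 hn; have NS := NSP NS0.
suff [x [xF A B]] : exists x, [/\ upd i h x \notin F,
  (forall f, f \in F -> Dle i h f -> (h i <= sq i f i) = (x <= f i)) &
  (forall f, f \in F -> Dle i f h -> (sq i f i <= h i) = (f i <= x))].
  by exists x; have [? ?] := key_red A B; split.
have hi := ltn_ord (h i).
case: (posnP (h i)) => [h0|hpos].
  exists (h i); split.
  - by apply/negP => /(in_upd hn); rewrite sq_i upd_i h0.
  - by move=> f _ _; rewrite h0.
  - by move=> f _ _; rewrite sq_i h0; case: (f i) => [[|?] ?].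
case: (eqVneq (nat_of_ord (h i)) t'.+1) => [hT|hT].
  pose m := maxn 1 (\max_(f in F | Dle i f h) nat_of_ord (f i)).
  have mlt : m < t'.+2.
    rewrite /m gtn_max /= ltnS; apply/bigmax_leqP => f _; rewrite -ltnS; exact: ltn_ord.
  have m1 : 0 < m by rewrite /m leq_max.
  exists (Ordinal mlt); split.
  - apply/negP => gF; have := in_upd hn gF; rewrite sq_i upd_i hT /=.
    by rewrite (negbTE (lt0n_neq0 m1)) eqxx.
  - move=> f fF D; rewrite sq_i hT /=.
    case: (posnP (f i)) => [->|fpos] /=.
      by rewrite ltn0 leqNgt m1.
    rewrite ltnSn; apply/esym; rewrite /m geq_max fpos /=.
    apply/bigmax_leqP => g /andP[gF Dg].
    case: (eqVneq g f) => [->//|ne].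
    exact: NS g f gF fF ne (Dle_trans Dg D).
  - move=> f fF D; rewrite sq_i hT.
    have -> : (if nat_of_ord (f i) == 0 then 0 else t'.+1) <= t'.+1 by case: (_ == 0).
    apply/esym; rewrite /m leq_max; apply/orP; right.
    by rewrite (leq_bigmax_cond (F := fun g : grid t'.+2 n => nat_of_ord (g i))) // fF D.
have hlt : nat_of_ord (h i) < t'.+1 by rewrite ltn_neqAle hT -ltnS.
case: (boolP [exists g in F, Dle i h g && (nat_of_ord (g i) == 0)]) => [/existsP[g0 /andP[g0F /andP[D0 e0]]]|none].
  have o1 : 1 < t'.+2 by [].
  have Lz : forall f, f \in F -> Dle i f h -> nat_of_ord (f i) = 0.
    move=> f fF D; case: (eqVneq f g0) => [->|ne]; first exact/eqP.
    by apply/eqP; rewrite -leqn0 -(eqP e0); exact: NS f g0 fF g0F ne (Dle_trans D D0).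
  exists (Ordinal o1); split.
  - apply/negP => gF.
    have := Lz _ gF; rewrite Dle_updl Dle_refl upd_i => /(_ isT) //.
  - by move=> f fF D; rewrite sq_i; apply: mid_A.
  - move=> f fF D; rewrite sq_i /= (Lz f fF D) /=; exact: leq0n.
exists ord0; split.
- apply/negP => gF; move/negP: none; apply; apply/existsP; exists (upd i h ord0).
  by rewrite gF Dle_updr Dle_refl upd_i.
- move=> f fF D; rewrite sq_i.
  have fn : nat_of_ord (f i) != 0.
    apply/negP => f0; move/negP: none; apply; apply/existsP; exists f.
    by rewrite fF D f0.
  by rewrite (negbTE fn) leq0n (ltnW hlt).
- by move=> f fF D; rewrite sq_i; apply: mid_B.
Qed.

Unset Implicit Arguments.

Theorem mainTheorem12 (d : Order.disp_t) (P : finPOrderType d) (t n : nat)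
    (ht : 2 <= t) (hn : 1 <= n) (F : {set grid t n}) (i : 'I_n) :
  @induced_saturated d P t n F -> ~ @separating t n F i ->
  exists F' : {set grid t n},
    [/\ @induced_saturated d P t n F', #|F'| = #|F| &
        forall f, f \in F' -> val (f i) = 0 \/ val (f i) = t.-1].
Proof.
move: ht F i; case: t => [|[|t']] // _ F i [noP sat] NS0; clear hn.
exists (sq i @: F); split.
- split.
  + move=> [phi [inj [inF ord]]]; apply: noP.
    pose psi x := odflt (phi x) [pick g in F | sq i g == phi x].
    have Hpsi : forall x, psi x \in F /\ sq i (psi x) = phi x.
      move=> x; rewrite /psi; case: pickP => [g /andP[gF /eqP e] //|none].
      have /imsetP[g gF e] := inF x.
      by move: (none g); rewrite gF -e eqxx.
    exists psi; split; last split.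
    * move=> x y e; apply: inj.
      by rewrite -(Hpsi x).2 -(Hpsi y).2 e.
    * by move=> x; case: (Hpsi x).
    * move=> x y; rewrite -ord -(Hpsi x).2 -(Hpsi y).2 (sq_gle NS0) //.
      - by case: (Hpsi x).
      - by case: (Hpsi y).
  + move=> h hn.
    have [x [xF A B]] := key NS0 hn.
    have [phi [inj [inF ord]]] := sat _ xF.
    pose hx := upd i h x.
    pose psi z := if phi z == hx then h else sq i (phi z).
    have inF' : forall z, phi z != hx -> phi z \in F.
      by move=> z ne; have /setU1P[e|//] := inF z; rewrite e eqxx in ne.
    exists psi; split; last split.
    * move=> z w; rewrite /psi.
      case: (eqVneq (phi z) hx) => ez; case: (eqVneq (phi w) hx) => ew.
      - by move=> _; apply: inj; rewrite ez ew.
      - move=> e; case/negP: hn; apply/imsetP; exists (phi w) => //.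
        exact: inF'.
      - move=> e; case/negP: hn; apply/imsetP; exists (phi z) => //.
        exact: inF'.
      - by move=> e; apply: inj; apply: (sq_inj NS0) => //; apply: inF'.
    * move=> z; rewrite /psi; case: (eqVneq (phi z) hx) => ez.
        exact: setU11.
      by apply/setU1r/imset_f/inF'.
    * move=> z w; rewrite -ord /psi.
      case: (eqVneq (phi z) hx) => ez; case: (eqVneq (phi w) hx) => ew.
      - by rewrite ez ew !(gleE i) !Dle_refl !leqnn.
      - by rewrite ez A //; apply: inF'.
      - by rewrite ew B //; apply: inF'.
      - by rewrite (sq_gle NS0) //; apply: inF'.
- by rewrite card_in_imset //; apply: sq_inj.
- move=> f /imsetP[g gF ->]; move: (sq_i i g).
  by case: (_ == 0) => e; [left|right]; exact: e.
Qed.
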